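(* The trilinear form on $\mathrm{Vect}\,S^1$ $$\beta_1(L,F,G)=\int_{S^1} l'(\varphi)\,\big(f'(\varphi)g''(\varphi)-f''(\varphi)g'(\varphi)\big)\,d\varphi,$$ where $L=l\frac{d}{d\varphi}$, $F=f\frac d{d\varphi}$, $G=g\frac d{d\varphi}$, is a continuous Leibniz $3$-cocycle on $\mathrm{Vect}\,S^1$ supported on the diagonal of $(S^1)^3$, i.e. $d\beta_1=0$ for the Leibniz coboundary.
   Context: $\mathrm{Vect}\,S^1$ is the Lie algebra of smooth vector fields on $S^1$ (coordinate $\varphi$), with bracket $[f\frac d{d\varphi},g\frac d{d\varphi}]=(fg'-f'g)\frac d{d\varphi}$. The Leibniz coboundary of a $3$-cochain $c$ is $dc(x_1,x_2,x_3,x_4)=\sum_{i<j}(-1)^{j+1}c(x_1,\dots,x_{i-1},[x_i,x_j],x_{i+1},\dots,\widehat{x_j},\dots,x_4)$. *)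

(* Defs.v *)
From Stdlib Require Import Reals.
From Coquelicot Require Import Coquelicot.
Open Scope R_scope.

(* A smooth function on S^1 = R / 2*PI*Z, represented as a 2*PI-periodic
   function R -> R having derivatives of all orders everywhere.
   A vector field f d/dphi on S^1 is identified with its coefficient f. *)
Definition smooth_S1 (f : R -> R) : Prop :=
  (forall (n : nat) (x : R), ex_derive_n f n x) /\
  (forall x : R, f (x + 2 * PI) = f x).

(* Lie bracket of Vect S^1: [f d/dphi, g d/dphi] = (f g' - f' g) d/dphi. *)
Definition vbracket (f g : R -> R) : R -> R :=
  fun x => f x * Derive g x - Derive f x * g x.

Definition cochain3 := (R -> R) -> (R -> R) -> (R -> R) -> R.

(* Leibniz coboundary of a 3-cochain, written out from
   dc(x1,..,x4) = sum_{i<j} (-1)^(j+1) c(x1,..,x_{i-1},[x_i,x_j],x_{i+1},..,^x_j,..,x4). *)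
Definition leibniz_d3 (c : cochain3) (x1 x2 x3 x4 : R -> R) : R :=
    - c (vbracket x1 x2) x3 x4            (* i=1, j=2 *)
    + c (vbracket x1 x3) x2 x4            (* i=1, j=3 *)
    - c (vbracket x1 x4) x2 x3            (* i=1, j=4 *)
    + c x1 (vbracket x2 x3) x4            (* i=2, j=3 *)
    - c x1 (vbracket x2 x4) x3            (* i=2, j=4 *)
    - c x1 x2 (vbracket x3 x4).           (* i=3, j=4 *)

Definition beta1 : cochain3 := fun l f g =>
  RInt (fun x => Derive l x *
                 (Derive f x * Derive_n g 2 x - Derive_n f 2 x * Derive g x))
       0 (2 * PI).

(* Main.v *)
Require Import Defs.
From Stdlib Require Import Reals Lra.
From Coquelicot Require Import Coquelicot.
Open Scope R_scope.

Lemma cR_mult (f g : R -> R) (x : R) : continuous f x -> continuous g x -> continuous (fun y => f y * g y) x.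
Proof. intros; now apply (continuous_mult f g). Qed.
Lemma cR_plus (f g : R -> R) (x : R) : continuous f x -> continuous g x -> continuous (fun y => f y + g y) x.
Proof. intros; now apply (continuous_plus f g). Qed.
Lemma cR_minus (f g : R -> R) (x : R) : continuous f x -> continuous g x -> continuous (fun y => f y - g y) x.
Proof. intros; now apply (continuous_minus f g). Qed.
Lemma cR_opp (f : R -> R) (x : R) : continuous f x -> continuous (fun y => - f y) x.
Proof. intros; now apply (continuous_opp f). Qed.

Lemma sm_ex f n x : smooth_S1 f -> ex_derive (Derive_n f n) x.
Proof. intros [H _]. exact (H (S n) x). Qed.

Lemma sm_c (f : R -> R) (n : nat) (x : R) : smooth_S1 f -> continuous (Derive_n f n) x.
Proof. intros H. apply (ex_derive_continuous (K:=R_AbsRing) (V:=R_NormedModule)). now apply sm_ex. Qed.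

Lemma sm_c0 f x : smooth_S1 f -> continuous f x.
Proof. intros H. exact (sm_c f 0 x H). Qed.
Lemma sm_c1 f x : smooth_S1 f -> continuous (Derive f) x.
Proof. intros H. exact (sm_c f 1 x H). Qed.
Lemma sm_c2 f x : smooth_S1 f -> continuous (Derive (Derive f)) x.
Proof. intros H. exact (sm_c f 2 x H). Qed.
Lemma sm_c3 f x : smooth_S1 f -> continuous (Derive (Derive (Derive f))) x.
Proof. intros H. exact (sm_c f 3 x H). Qed.
Lemma sm_e0 f x : smooth_S1 f -> ex_derive f x.
Proof. intros H. exact (sm_ex f 0 x H). Qed.
Lemma sm_e1 f x : smooth_S1 f -> ex_derive (Derive f) x.
Proof. intros H. exact (sm_ex f 1 x H). Qed.
Lemma sm_e2 f x : smooth_S1 f -> ex_derive (Derive (Derive f)) x.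
Proof. intros H. exact (sm_ex f 2 x H). Qed.
Lemma sm_e3 f x : smooth_S1 f -> ex_derive (Derive (Derive (Derive f))) x.
Proof. intros H. exact (sm_ex f 3 x H). Qed.

Lemma per_D (f : R -> R) : (forall x, ex_derive f x) -> (forall x, f (x + 2*PI) = f x) ->
  forall x, Derive f (x + 2*PI) = Derive f x.
Proof.
  intros He Hp x.
  transitivity (Derive (fun y => f (y + 2*PI)) x).
  - rewrite (Derive_comp f (fun y => y + 2*PI)); auto.
    + replace (Derive (fun y => y + 2*PI) x) with 1; [ring|].
      symmetry; apply is_derive_unique; auto_derive; auto; ring.
    + auto_derive; auto.
  - apply Derive_ext; intro; apply Hp.
Qed.

Lemma sm_p0 f x : smooth_S1 f -> f (x + 2*PI) = f x.
Proof. intros [_ H]; auto. Qed.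
Lemma sm_p1 f x : smooth_S1 f -> Derive f (x + 2*PI) = Derive f x.
Proof. intros H. apply per_D; intros; [apply sm_e0|apply sm_p0]; auto. Qed.
Lemma sm_p2 f x : smooth_S1 f -> Derive (Derive f) (x + 2*PI) = Derive (Derive f) x.
Proof. intros H. apply per_D; intros; [apply sm_e1|apply sm_p1]; auto. Qed.

Ltac eta_red := repeat match goal with |- context[fun y => ?h y] => change (fun y => h y) with h end.
Ltac exs := repeat split; repeat match goal with
  | H : smooth_S1 ?f |- ex_derive (fun y => Derive (Derive (Derive ?f)) y) _ => exact (sm_e3 f _ H)
  | H : smooth_S1 ?f |- ex_derive (fun y => Derive (Derive ?f) y) _ => exact (sm_e2 f _ H)
  | H : smooth_S1 ?f |- ex_derive (fun y => Derive ?f y) _ => exact (sm_e1 f _ H)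
  | H : smooth_S1 ?f |- ex_derive (fun y => ?f y) _ => exact (sm_e0 f _ H)
  | H : smooth_S1 ?f |- ex_derive (Derive (Derive (Derive ?f))) _ => exact (sm_e3 f _ H)
  | H : smooth_S1 ?f |- ex_derive (Derive (Derive ?f)) _ => exact (sm_e2 f _ H)
  | H : smooth_S1 ?f |- ex_derive (Derive ?f) _ => exact (sm_e1 f _ H)
  | H : smooth_S1 ?f |- ex_derive ?f _ => exact (sm_e0 f _ H)
  end.

Lemma br_D f g x : smooth_S1 f -> smooth_S1 g ->
  Derive (vbracket f g) x = f x * Derive (Derive g) x - Derive (Derive f) x * g x.
Proof.
  intros Hf Hg. unfold vbracket.
  apply is_derive_unique.
  auto_derive.
  - exs.
  - eta_red. ring.
Qed.

Lemma br_D2 f g x : smooth_S1 f -> smooth_S1 g ->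
  Derive_n (vbracket f g) 2 x =
  Derive f x * Derive (Derive g) x + f x * Derive (Derive (Derive g)) x
  - Derive (Derive (Derive f)) x * g x - Derive (Derive f) x * Derive g x.
Proof.
  intros Hf Hg. simpl.
  rewrite (Derive_ext _ (fun y => f y * Derive (Derive g) y - Derive (Derive f) y * g y) x)
    by (intro; apply br_D; auto).
  apply is_derive_unique.
  auto_derive.
  - exs.
  - eta_red. ring.
Qed.

Definition T2 := 2 * PI.

Lemma beta_s1 f g u v : smooth_S1 f -> smooth_S1 g ->
  beta1 (vbracket f g) u v = RInt (fun x =>
    (f x * Derive (Derive g) x - Derive (Derive f) x * g x) *
    (Derive u x * Derive (Derive v) x - Derive (Derive u) x * Derive v x)) 0 (2*PI).
Proof.
  intros Hf Hg. unfold beta1. apply RInt_ext. intros x _.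
  rewrite br_D by auto. reflexivity.
Qed.

Lemma beta_s2 l f g u : smooth_S1 f -> smooth_S1 g ->
  beta1 l (vbracket f g) u = RInt (fun x => Derive l x *
    ((f x * Derive (Derive g) x - Derive (Derive f) x * g x) * Derive (Derive u) x -
     (Derive f x * Derive (Derive g) x + f x * Derive (Derive (Derive g)) x
  - Derive (Derive (Derive f)) x * g x - Derive (Derive f) x * Derive g x) * Derive u x)) 0 (2*PI).
Proof.
  intros Hf Hg. unfold beta1. apply RInt_ext. intros x _.
  rewrite br_D, br_D2 by auto. reflexivity.
Qed.

Lemma beta_s3 l u f g : smooth_S1 f -> smooth_S1 g ->
  beta1 l u (vbracket f g) = RInt (fun x => Derive l x *
    (Derive u x * (Derive f x * Derive (Derive g) x + f x * Derive (Derive (Derive g)) x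
  - Derive (Derive (Derive f)) x * g x - Derive (Derive f) x * Derive g x) -
     Derive (Derive u) x * (f x * Derive (Derive g) x - Derive (Derive f) x * g x))) 0 (2*PI).
Proof.
  intros Hf Hg. unfold beta1. apply RInt_ext. intros x _.
  rewrite br_D, br_D2 by auto. reflexivity.
Qed.

Lemma comb (pA pB pC pD pE pF h dh : R -> R) :
  (forall x, continuous pA x) -> (forall x, continuous pB x) ->
  (forall x, continuous pC x) -> (forall x, continuous pD x) ->
  (forall x, continuous pE x) -> (forall x, continuous pF x) ->
  (forall x, is_derive h x (dh x)) -> (forall x, continuous dh x) ->
  (forall x, - pA x + pB x - pC x + pD x - pE x - pF x = dh x) ->
  h (2*PI) = h 0 ->
  - RInt pA 0 (2*PI) + RInt pB 0 (2*PI) - RInt pC 0 (2*PI) + RInt pD 0 (2*PI)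
  - RInt pE 0 (2*PI) - RInt pF 0 (2*PI) = 0.
Proof.
  intros cA cB cC cD cE cF Hd cd Heq Hp.
  assert (I : forall p : R -> R, (forall x, continuous p x) -> is_RInt p 0 (2*PI) (RInt p 0 (2*PI))).
  { intros p cp. apply (RInt_correct (V:=R_CompleteNormedModule)).
    apply (ex_RInt_continuous (V:=R_CompleteNormedModule)). intros; apply cp. }
  pose proof (is_RInt_minus _ _ _ _ _ _ (is_RInt_minus _ _ _ _ _ _ (is_RInt_plus _ _ _ _ _ _
     (is_RInt_minus _ _ _ _ _ _ (is_RInt_plus _ _ _ _ _ _ (is_RInt_opp _ _ _ _ (I pA cA)) (I pB cB))
     (I pC cC)) (I pD cD)) (I pE cE)) (I pF cF)) as H.
  pose proof (is_RInt_derive h dh 0 (2*PI) (fun x _ => Hd x) (fun x _ => cd x)) as H2.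
  apply (is_RInt_unique (V:=R_CompleteNormedModule)) in H. apply (is_RInt_unique (V:=R_CompleteNormedModule)) in H2.
  rewrite (RInt_ext _ dh) in H by (intros x _; rewrite <- Heq; reflexivity).
  rewrite H2 in H. rewrite Hp in H. unfold minus, plus, opp in H. simpl in H.
  lra.
Qed.

Ltac cont := repeat match goal with
  | |- continuous (fun y => _ * _) _ => apply cR_mult
  | |- continuous (fun y => _ + _) _ => apply cR_plus
  | |- continuous (fun y => _ - _) _ => apply cR_minus
  | |- continuous (fun y => - _) _ => apply cR_opp
  | H : smooth_S1 ?f |- continuous (fun y => Derive (Derive (Derive ?f)) y) _ => exact (sm_c3 f _ H)
  | H : smooth_S1 ?f |- continuous (fun y => Derive (Derive ?f) y) _ => exact (sm_c2 f _ H)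
  | H : smooth_S1 ?f |- continuous (fun y => Derive ?f y) _ => exact (sm_c1 f _ H)
  | H : smooth_S1 ?f |- continuous (fun y => ?f y) _ => exact (sm_c0 f _ H)
  | H : smooth_S1 ?f |- continuous (Derive (Derive (Derive ?f))) _ => exact (sm_c3 f _ H)
  | H : smooth_S1 ?f |- continuous (Derive (Derive ?f)) _ => exact (sm_c2 f _ H)
  | H : smooth_S1 ?f |- continuous (Derive ?f) _ => exact (sm_c1 f _ H)
  | H : smooth_S1 ?f |- continuous ?f _ => exact (sm_c0 f _ H)
  end.

Lemma per_all (f : R -> R) : smooth_S1 f -> f (2*PI) = f 0 /\ Derive f (2*PI) = Derive f 0 /\ Derive (Derive f) (2*PI) = Derive (Derive f) 0.
Proof.
  intros H. pose proof (sm_p0 f 0 H). pose proof (sm_p1 f 0 H). pose proof (sm_p2 f 0 H).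
  rewrite Rplus_0_l in *. auto.
Qed.

Theorem mainTheorem5 :
  forall x1 x2 x3 x4 : R -> R,
    smooth_S1 x1 -> smooth_S1 x2 -> smooth_S1 x3 -> smooth_S1 x4 ->
    leibniz_d3 beta1 x1 x2 x3 x4 = 0.
Proof.
  intros a b c d Ha Hb Hc Hd. unfold leibniz_d3.
  rewrite (beta_s1 a b c d), (beta_s1 a c b d), (beta_s1 a d b c),
    (beta_s2 a b c d), (beta_s2 a b d c), (beta_s3 a b c d) by auto.
  apply (comb _ _ _ _ _ _ (fun x => Derive a x * b x * Derive c x * Derive (Derive d) x - Derive a x * b x * Derive (Derive c) x * Derive d x - Derive a x * Derive b x * c x * Derive (Derive d) x + Derive a x * Derive b x * Derive (Derive c) x * d x + Derive a x * Derive (Derive b) x * c x * Derive d x - Derive a x * Derive (Derive b) x * Derive c x * d x) (fun x => Derive a x * b x * Derive c x * Derive (Derive (Derive d)) x - Derive a x * b x * Derive (Derive (Derive c)) x * Derive d x - Derive a x * Derive b x * c x * Derive (Derive (Derive d)) x + Derive a x * Derive b x * Derive (Derive (Derive c)) x * d x + Derive a x * Derive (Derive (Derive b)) x * c x * Derive d x - Derive a x * Derive (Derive (Derive b)) x * Derive c x * d x + Derive (Derive a) x * b x * Derive c x * Derive (Derive d) x - Derive (Derive a) x * b x * Derive (Derive c) x * Derive d x - Derive (Derive a) x * Derive b x * c x * Derive (Derive d) x + Derive (Derive a) x * Derive b x * Derive (Derive c) x * d x + Derive (Derive a) x * Derive (Derive b) x * c x * Derive d x - Derive (Derive a) x * Derive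 (Derive b) x * Derive c x * d x));
    try (intro x; solve [cont]).
  - intro x. auto_derive.
    + exs.
    + eta_red. ring.
  - intro x. cbv beta. ring.
  - destruct (per_all a Ha) as (a0 & a1 & a2).
    destruct (per_all b Hb) as (b0 & b1 & b2).
    destruct (per_all c Hc) as (c0 & c1 & c2).
    destruct (per_all d Hd) as (d0 & d1 & d2).
    rewrite ?a0, ?a1, ?a2, ?b0, ?b1, ?b2, ?c0, ?c1, ?c2, ?d0, ?d1, ?d2. reflexivity.
Qed.
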